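(* Let $U,V$ be Banach spaces, $L=L(V,U)$ the space of bounded linear maps with operator norm, $T>0$, $\alpha,\gamma\in(0,1]$ with $\alpha+\gamma>1$, and $\delta>0$. Let $F:[0,T]\times C^{\alpha}([0,T],U)\to L$ be $\delta$-non-anticipating and such that for each $Z\in C^{\alpha}([0,T],U)$ the map $t\mapsto F(t,Z)$ is $\gamma$-Hölder continuous. Let $X\in C^{\alpha}([0,T],V)$. Then for each $y_0\in U$ there is a unique $Y\in C^{\alpha}([0,T],U)$ such that $$Y_t=y_0+\int_0^tF(u,Y)\,dX_u,\qquad t\in[0,T],$$ where the integral is a Young integral.
   Context: $C^{\alpha}([0,T],U)$ denotes the $\alpha$-Hölder continuous paths. For $Y\in C([0,T],U)$ and $r\in[0,T]$, $\mathcal{Y}_r\in C([0,T],U)$ is defined by $\mathcal{Y}_r(x):=Y_{r\wedge x}$. $F$ is $\delta$-non-anticipating if $F(t,Y)=F(t,\mathcal{Y}_{(t-\delta)_+})$ for all $Y$ and all $t\in[0,T]$, where $(a)_+=\max(a,0)$. Young integral: if $W\in C^{\gamma}([a,b],L)$ and $X\in C^{\alpha}([a,b],V)$ with $\alpha+\gamma>1$, $\int_a^bW_u\,dX_u$ is the limit of Riemann sums $\sum_iW_{s_i}(X_{s_{i+1}}-X_{s_i})$ over partitions of $[a,b]$ as the mesh tends to $0$. *)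

(* Defs.v *)
From HB Require Import structures.
From mathcomp Require Import all_boot all_order all_algebra.
From mathcomp Require Import all_classical all_reals all_analysis.
Set Implicit Arguments. Unset Strict Implicit. Unset Printing Implicit Defensive.
Import Order.TTheory GRing.Theory Num.Theory.
Import numFieldNormedType.Exports.
Local Open Scope ring_scope.

(* Paths are functions R -> U; only their values on [0,T] matter. *)

Definition holder_on {R : realType} {U : normedModType R}
  (T alpha : R) (f : R -> U) : Prop :=
  exists C : R, forall s t : R, 0 <= s <= T -> 0 <= t <= T ->
    `|f t - f s| <= C * (`|t - s| `^ alpha).

Definition stopped {R : realType} {U : Type} (Y : R -> U) (r : R) : R -> U :=
  fun x => Y (Num.min r x).

Definition non_anticipating {R : realType} {U V : normedModType R}
  (T alpha delta : R) (F : R -> (R -> U) -> {linear V -> U}) : Prop :=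
  forall (t : R) (Y : R -> U), 0 <= t <= T -> holder_on T alpha Y ->
    F t Y = F t (stopped Y (Num.max (t - delta) 0)).

Definition is_partition {R : realType} (a b : R) (n : nat) (s : nat -> R) : Prop :=
  s 0%N = a /\ s n = b /\ forall i : nat, (i < n)%N -> s i < s i.+1.

Definition mesh_lt {R : realType} (n : nat) (s : nat -> R) (eta : R) : Prop :=
  forall i : nat, (i < n)%N -> s i.+1 - s i < eta.

Definition riemann_sum {R : realType} {U V : normedModType R}
  (W : R -> {linear V -> U}) (X : R -> V) (n : nat) (s : nat -> R) : U :=
  \sum_(i < n) W (s i) (X (s i.+1) - X (s i)).

Definition is_young_integral {R : realType} {U V : normedModType R}
  (W : R -> {linear V -> U}) (X : R -> V) (a b : R) (I : U) : Prop :=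
  forall eps : R, 0 < eps -> exists2 eta : R, 0 < eta &
    forall (n : nat) (s : nat -> R), is_partition a b n s -> mesh_lt n s eta ->
      `|riemann_sum W X n s - I| < eps.

Definition solves_young_ode {R : realType} {U V : normedModType R}
  (T : R) (F : R -> (R -> U) -> {linear V -> U}) (X : R -> V) (y0 : U)
  (Y : R -> U) : Prop :=
  forall t : R, 0 <= t <= T ->
    is_young_integral (fun u => F u Y) X 0 t (Y t - y0).

(* Main.v *)
Require Import Defs.
From HB Require Import structures.
From mathcomp Require Import all_boot all_order all_algebra.
From mathcomp Require Import all_classical all_reals all_analysis.
From mathcomp Require Import ring lra.
Import Order.TTheory GRing.Theory Num.Theory.
Import numFieldNormedType.Exports.
Local Open Scope ring_scope.

Fixpoint Sl {R : realType} {U : normedModType R} (Xi : R -> R -> U) (x : R) (p : seq R) : U :=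
  if p is y :: p' then Xi x y + Sl Xi y p' else 0.

Lemma Sl_cat {R : realType} {U : normedModType R} (Xi : R -> R -> U) x p q :
  Sl Xi x (p ++ q) = Sl Xi x p + Sl Xi (last x p) q.
Proof. elim: p x => [|y p IH] x /=; first by rewrite add0r. by rewrite IH addrA. Qed.

Lemma lt_path_min {R : realType} {x : R} {p} : path <%R x p -> forall z, z \in p -> x < z.
Proof. move=> /(order_path_min (@lt_trans _ _)) /allP H z /H //. Qed.

Lemma lt_path_last {R : realType} {x : R} {p} : path <%R x p -> forall z, z \in x :: p -> z <= last x p.
Proof.
elim: p x => [|y p IH] x /=; first by move=> _ z; rewrite inE => /eqP ->.
move=> /andP[xy yp] z; rewrite inE => /orP[/eqP ->|zin].
  apply: (le_trans (ltW xy)); exact: (IH _ yp y (mem_head _ _)).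
exact: (IH _ yp z zin).
Qed.

Lemma lt_path_le_last {R : realType} {x : R} {p} : path <%R x p -> x <= last x p.
Proof. move=> H; exact: lt_path_last H x (mem_head _ _). Qed.

Lemma lt_path_lt_last {R : realType} {x : R} {p} : path <%R x p -> p != [::] -> x < last x p.
Proof.
case: p => [//|y p] /andP[xy yp] _.
exact: (lt_le_trans xy (lt_path_le_last yp)).
Qed.

Lemma split_lt {R : realType} (x m : R) p : path <%R x p -> x <= m -> m < last x p ->
  exists p1 z p2, [/\ p = p1 ++ z :: p2, last x p1 <= m & m < z].
Proof.
elim: p x => [|y p IH] x /=; first by move=> _ xm mx; have := lt_le_trans mx xm; rewrite ltxx.
move=> /andP[xy yp] xm mb.
have [my|ym] := ltP m y; first by exists [::], y, p; split.
have [p1 [z [p2 [-> H1 H2]]]] := IH y yp ym mb.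
by exists (y :: p1), z, p2; split.
Qed.

Lemma zmod_id4 {V : zmodType} (P1 Q P2 B A1 A2 C : V) :
  P1 + (Q + P2) - B = - (B - A1 - A2) - (A2 - Q - C) + (P1 - A1) + (P2 - C).
Proof.
rewrite !opprD !opprK !addrA addrK.
rewrite 3!(addrAC _ _ (- A1)) addrK 2!(addrAC _ _ (- C)) addrK.
by rewrite (addrC (-B) Q) (addrAC Q (-B) P1) (addrAC (Q + P1) (-B) P2) (addrC Q P1).
Qed.

Lemma norm4 {R : realType} {U : normedModType R} (a b c d : U) :
  `|a + b + c + d| <= `|a| + `|b| + `|c| + `|d|.
Proof.
apply: (le_trans (ler_normD _ _)); rewrite lerD2r.
apply: (le_trans (ler_normD _ _)); rewrite lerD2r.
exact: ler_normD.
Qed.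

Lemma powR_le {R : realType} {x y r : R} : 0 <= r -> 0 <= x -> x <= y -> x `^ r <= y `^ r.
Proof.
move=> r0 x0 xy; apply: ge0_ler_powR => //; rewrite nnegrE //; exact: le_trans x0 xy.
Qed.

Lemma powR_lt1 {R : realType} (x r : R) : 0 < x < 1 -> 0 < r -> x `^ r < 1.
Proof.
move=> /andP[x0 x1] r0; rewrite /powR gt_eqF // expR_lt1 pmulr_rlt0 //.
by apply: ln_lt0; rewrite x0 x1.
Qed.

Definition Asew {R : realType} (c th : R) : R := 2 * c / (1 - 2 * (2^-1) `^ th).

Lemma rho_lt1 {R : realType} (th : R) : 1 < th -> 2 * (2^-1) `^ th < 1.
Proof.
move=> th1.
have h : (2^-1 : R) `^ th = 2^-1 * (2^-1) `^ (th - 1).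
  by rewrite mulr_powRB1 // ?invr_ge0 // (lt_trans ltr01 th1).
rewrite h mulrA mulfV // mul1r; apply: powR_lt1; last by rewrite subr_gt0.
by rewrite invr_gt0 ltr0n /= invf_lt1 // ltr1n.
Qed.

Lemma Asew_ge0 {R : realType} (c th : R) : 0 <= c -> 1 < th -> 0 <= Asew c th.
Proof.
move=> c0 th1; rewrite /Asew divr_ge0 ?mulr_ge0 //.
by rewrite subr_ge0 ltW // rho_lt1.
Qed.

Lemma sewing {R : realType} {U : normedModType R} (Xi : R -> R -> U) (T c th : R) :
 0 <= c -> 1 < th ->
 (forall s u t, 0 <= s -> s <= u -> u <= t -> t <= T ->
    `|Xi s t - Xi s u - Xi u t| <= c * (t - s) `^ th) ->
 forall x p, path <%R x p -> 0 <= x -> last x p <= T ->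
 `|Sl Xi x p - Xi x (last x p)| <= Asew c th * (last x p - x) `^ th.
Proof.
move=> c0 th1 H3 x p.
have th0 : th != 0 by rewrite gt_eqF // (lt_trans ltr01 th1).
have [n] := ubnP (size p); elim: n x p => // n IH x p szp xp x0 bT.
have [Ep0|pn0] := eqVneq p [::].
  rewrite Ep0 /= in bT *; rewrite subrr powR0 // mulr0 sub0r normrN.
  have := H3 x x x x0 (lexx _) (lexx _) bT.
  by rewrite (subrr x) powR0 // mulr0 subrr sub0r normrN.
set b := last x p in bT *.
have xb : x < b by exact: lt_path_lt_last.
set m := (x + b) / 2.
have xm : x <= m by rewrite /m; lra.
have mb : m < b by rewrite /m; lra.
have [p1 [z [p2 [Ep xjm mz]]]] := @split_lt _ x m p xp xm mb.
move: xp szp; rewrite /b Ep cat_path => /andP[xp1 /= /andP[xjz zp2]].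
rewrite size_cat /= => szp.
rewrite last_cat /=.
rewrite Sl_cat /=.
set xj := last x p1 in xjz xjm *.
set b' := last z p2.
have xxj : x <= xj by exact: lt_path_le_last.
have zb : z <= b' by exact: lt_path_le_last.
have xj0 : 0 <= xj by exact: le_trans x0 xxj.
have bb : b = b' by rewrite /b Ep last_cat.
rewrite bb in bT.
have xjT : xj <= T by apply: le_trans (ltW xjz) (le_trans zb bT).
have z0 : 0 <= z by apply: le_trans xj0 (ltW xjz).
have sz1 : (size p1 < n)%N.
  by move: szp; rewrite addnS ltnS => /(leq_ltn_trans (leq_addr _ _)).
have sz2 : (size p2 < n)%N.
  by move: szp; rewrite addnS ltnS => /(leq_ltn_trans (leq_addl _ _)).
have d1 := IH x p1 sz1 xp1 x0 xjT.
have d2 := IH z p2 sz2 zp2 z0 bT.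
rewrite -/xj in d1. rewrite -/b' in d2.
have e1 := H3 x xj b' x0 xxj (le_trans (ltW xjz) zb) bT.
have e2 := H3 xj z b' xj0 (ltW xjz) zb bT.
rewrite (zmod_id4 _ _ _ _ (Xi x xj) (Xi xj b') (Xi z b')) (le_trans (norm4 _ _ _ _)) // !normrN.
set A := Asew c th in d1 d2 *.
set L := b' - x.
have L0 : 0 <= L by rewrite /L subr_ge0 (le_trans xxj (le_trans (ltW xjz) zb)).
have hr0 : 0 <= th by rewrite ltW // (lt_trans ltr01 th1).
have A0 : 0 <= A by exact: Asew_ge0.
have p1b : (xj - x) `^ th <= (2^-1) `^ th * L `^ th.
  rewrite -powRM ?invr_ge0 //; apply: powR_le => //; first by rewrite subr_ge0.
  rewrite /L; move: xjm; rewrite /m bb; lra.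
have p2b : (b' - z) `^ th <= (2^-1) `^ th * L `^ th.
  rewrite -powRM ?invr_ge0 //; apply: powR_le => //; first by rewrite subr_ge0.
  rewrite /L; move: mz; rewrite /m bb; lra.
have p3b : (b' - xj) `^ th <= L `^ th.
  by apply: powR_le => //; rewrite ?subr_ge0 /L; [exact: le_trans (ltW xjz) zb| lra].
have hA0 : A * (1 - 2 * (2^-1) `^ th) = 2 * c.
  by rewrite /A /Asew divfK // subr_eq0 eq_sym lt_eqF // rho_lt1.
have hA : A * L `^ th = 2 * (c * L `^ th) + 2 * (A * ((2^-1) `^ th * L `^ th)).
  have -> : 2 * (c * L `^ th) = (2 * c) * L `^ th by rewrite mulrA.
  rewrite -hA0; ring.
have f1 : A * (xj - x) `^ th <= A * ((2^-1) `^ th * L `^ th) by exact: ler_wpM2l.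
have f2 : A * (b' - z) `^ th <= A * ((2^-1) `^ th * L `^ th) by exact: ler_wpM2l.
have f3 : c * (b' - xj) `^ th <= c * L `^ th by exact: ler_wpM2l.
rewrite hA.
rewrite -/L in e1.
move: e1 e2 d1 d2 f1 f2 f3.
rewrite [`|Xi xj b' - _ - _|]distrC.
set q1 := A * ((2^-1) `^ th * L `^ th).
set q2 := c * L `^ th.
lra.
Qed.

Lemma pow_mesh {R : realType} (d eta th : R) : 1 < th -> 0 <= d -> d <= eta ->
  d `^ th <= eta `^ (th - 1) * d.
Proof.
move=> th1 d0 de.
rewrite -mulr_powRB1 ?(lt_trans ltr01 th1) // mulrC ler_wpM2r //.
by apply: powR_le => //; rewrite subr_ge0 ltW.
Qed.

Lemma merge {R : realType} {U : normedModType R} (Xi : R -> R -> U) (T c th : R) :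
 0 <= c -> 1 < th ->
 (forall s u t, 0 <= s -> s <= u -> u <= t -> t <= T ->
    `|Xi s t - Xi s u - Xi u t| <= c * (t - s) `^ th) ->
 forall eta x p m, path <%R x p -> path <%R x m -> last x m = last x p ->
   {subset p <= m} -> 0 <= x -> last x p <= T ->
   path (fun u v => v - u <= eta) x p ->
   `|Sl Xi x m - Sl Xi x p| <= Asew c th * eta `^ (th - 1) * (last x p - x).
Proof.
move=> c0 th1 H3 eta x p; elim: p x => [|y p IH] x m.
  move=> _ xm /= lE _ _ _ _.
  have -> : m = [::].
    apply/eqP; apply/negPn/negP => mn0.
    by have := lt_path_lt_last xm mn0; rewrite lE ltxx.
  by rewrite /= subrr normr0 subrr mulr0.
move=> /= /andP[xy yp] xm lE sub x0 bT /andP[mxy mp].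
have ym : y \in m by apply: sub; exact: mem_head.
move: xm lE sub; case/splitPr: ym => m1 m2 xm lE sub.
move: xm lE sub; rewrite -cat_rcons cat_path last_cat last_rcons.
move=> /andP[xm1 ym2] lE sub.
have sub' : {subset p <= m2}.
  move=> z zp; have := sub z; rewrite inE zp orbT => /(_ isT).
  rewrite mem_cat => /orP[zm1|//].
  have h1 := lt_path_min yp z zp.
  have h2 := lt_path_last xm1 z; rewrite last_rcons inE zm1 orbT in h2.
  by have := lt_le_trans h1 (h2 isT); rewrite ltxx.
have yT : y <= T by exact: le_trans (lt_path_le_last yp) bT.
have y0 : 0 <= y by exact: le_trans x0 (ltW xy).
have d1 := sewing Xi T c th c0 th1 H3 _ _ xm1 x0; rewrite last_rcons in d1; have {d1} d1 := d1 yT.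
have d2 := IH y m2 yp ym2 lE sub' y0 bT mp.
rewrite Sl_cat last_rcons opprD addrACA.
apply: (le_trans (ler_normD _ _)).
have e1 : Asew c th * (y - x) `^ th <= Asew c th * eta `^ (th - 1) * (y - x).
  rewrite -mulrA; apply: ler_wpM2l; first exact: Asew_ge0.
  by apply: pow_mesh => //; rewrite subr_ge0 ltW.
have -> : Asew c th * eta `^ (th - 1) * (last y p - x) =
   Asew c th * eta `^ (th - 1) * (y - x) + Asew c th * eta `^ (th - 1) * (last y p - y) by ring.
apply: lerD => //; exact: le_trans d1 e1.
Qed.

Lemma path_iota {R : realType} (e : rel R) (s : nat -> R) i0 k :
  (forall i, (i0 <= i)%N -> (i < i0 + k)%N -> e (s i) (s i.+1)) ->
  path e (s i0) (map s (iota i0.+1 k)).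
Proof.
elim: k i0 => [//|k IH] i0 H /=.
apply/andP; split; first by apply: H; rewrite ?leqnn // addnS ltnS leq_addr.
apply: IH => i h1 h2; apply: H; first exact: ltnW.
by move: h2; rewrite addSn addnS.
Qed.

Lemma last_iota {R : realType} (s : nat -> R) i0 k :
  last (s i0) (map s (iota i0.+1 k)) = s (i0 + k)%N.
Proof.
elim: k i0 => [|k IH] i0 /=; first by rewrite addn0.
by rewrite IH addSnnS.
Qed.

Lemma Sl_iota {R : realType} {U : normedModType R} (Xi : R -> R -> U) (s : nat -> R) i0 k :
  Sl Xi (s i0) (map s (iota i0.+1 k)) = \sum_(i < k) Xi (s (i0 + i)%N) (s (i0 + i).+1).
Proof.
elim: k i0 => [|k IH] i0 /=; first by rewrite big_ord0.
rewrite big_ord_recl /= addn0 IH; congr (_ + _).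
by apply: eq_bigr => i _; rewrite /bump /= add1n addSnnS.
Qed.

Definition XiY {R : realType} {U V : normedModType R}
  (W : R -> {linear V -> U}) (X : R -> V) : R -> R -> U :=
  fun u v => W u (X v - X u).

Lemma part_path {R : realType} (a b : R) n s eta :
  is_partition a b n s -> (forall i, (i < n)%N -> s i.+1 - s i <= eta) ->
  [/\ path <%R a (map s (iota 1 n)), last a (map s (iota 1 n)) = b &
      path (fun u v => v - u <= eta) a (map s (iota 1 n))].
Proof.
rewrite /is_partition => -[s0 [sn sinc]] mesh; rewrite -s0; split.
- by apply: path_iota => i _; rewrite add0n; exact: sinc.
- by rewrite last_iota add0n.
- by apply: path_iota => i _; rewrite add0n; exact: mesh.
Qed.

Lemma riemann_Sl {R : realType} {U V : normedModType R}
  (W : R -> {linear V -> U}) (X : R -> V) n s :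
  riemann_sum W X n s = Sl (XiY W X) (s 0%N) (map s (iota 1 n)).
Proof. by rewrite Sl_iota /riemann_sum. Qed.

Definition unif {R : realType} (a b : R) (N : nat) : nat -> R :=
  fun i => a + i%:R * ((b - a) / N.+1%:R).

Lemma unif_part {R : realType} (a b : R) N : a < b ->
  is_partition a b N.+1 (unif a b N) /\
  forall i, unif a b N i.+1 - unif a b N i = (b - a) / N.+1%:R.
Proof.
move=> ab.
have hi : forall i, unif a b N i.+1 - unif a b N i = (b - a) / N.+1%:R.
  by move=> i; rewrite /unif -natr1; ring.
split=> //; split; [|split].
- by rewrite /unif mul0r addr0.
- by rewrite /unif [X in a + X]mulrC divfK ?pnatr_eq0 // addrC subrK.
- move=> i _; rewrite -subr_gt0 hi divr_gt0 //; by rewrite subr_gt0.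
Qed.

Lemma small_pow {R : realType} (z eps : R) : 0 < z -> 0 < eps ->
  exists2 eta, 0 < eta & forall x, 0 <= x -> x <= eta -> x `^ z <= eps.
Proof.
move=> z0 e0; exists (eps `^ z^-1); first exact: powR_gt0.
move=> x x0 xe; apply: (le_trans (powR_le (ltW z0) x0 xe)).
by rewrite -powRrM mulVf ?gt_eqF // powRr1 // ltW.
Qed.

Lemma hsmall {R : realType} (a b eta : R) : 0 < eta ->
  exists N0, forall N, (N0 <= N)%N -> (b - a) / N.+1%:R < eta.
Proof.
move=> e0; exists (Num.bound (`|b - a| / eta)) => N hN.
rewrite ltr_pdivrMr // -ltr_pdivrMl // mulrC.
have h : (b - a) / eta <= `|b - a| / eta.
  by apply: ler_wpM2r; [rewrite invr_ge0 ltW | exact: ler_norm].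
apply: (le_lt_trans h).
apply: (lt_le_trans (archi_boundP _)); first by rewrite divr_ge0 // ltW.
by rewrite ler_nat; apply: (leq_trans hN).
Qed.

Lemma compare {R : realType} {U : normedModType R} (Xi : R -> R -> U) (T c th : R) :
 0 <= c -> 1 < th ->
 (forall s u t, 0 <= s -> s <= u -> u <= t -> t <= T ->
    `|Xi s t - Xi s u - Xi u t| <= c * (t - s) `^ th) ->
 forall a b eta1 eta2 p q, 0 <= a -> a < b -> b <= T ->
   path <%R a p -> last a p = b -> path (fun u v => v - u <= eta1) a p ->
   path <%R a q -> last a q = b -> path (fun u v => v - u <= eta2) a q ->
   `|Sl Xi a p - Sl Xi a q| <=
     Asew c th * eta1 `^ (th - 1) * (b - a) + Asew c th * eta2 `^ (th - 1) * (b - a).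
Proof.
move=> c0 th1 H3 a b eta1 eta2 p q a0 ab bT hp lp mp hq lq mq.
set M := sort <=%O (undup (p ++ q)).
have memM z : (z \in M) = (z \in p) || (z \in q) by rewrite mem_sort mem_undup mem_cat.
have allM : all (<%R a) M.
  apply/allP => z; rewrite memM => /orP[]; [exact: (lt_path_min hp z)|exact: (lt_path_min hq z)].
have pM : path <%R a M by rewrite path_min_sorted // sort_lt_sorted undup_uniq.
have bp : b \in p.
  have := mem_last a p; rewrite lp inE => /orP[/eqP ba|//].
  by move: ab; rewrite ba ltxx.
have lM : last a M = b.
  apply: le_anti; apply/andP; split; last first.
    by apply: (lt_path_last pM); rewrite inE memM bp orbT.
  have := mem_last a M; rewrite inE => /orP[/eqP ->|]; first exact: ltW.
  rewrite memM => /orP[z|z].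
    by rewrite -lp; apply: (lt_path_last hp); rewrite inE z orbT.
  by rewrite -lq; apply: (lt_path_last hq); rewrite inE z orbT.
have d1 := merge Xi T c th c0 th1 H3 eta1 a p M hp pM
  ltac:(by rewrite lM lp) ltac:(by move=> z zp; rewrite memM zp) a0 ltac:(by rewrite lp) mp.
have d2 := merge Xi T c th c0 th1 H3 eta2 a q M hq pM
  ltac:(by rewrite lM lq) ltac:(by move=> z zq; rewrite memM zq orbT) a0 ltac:(by rewrite lq) mq.
rewrite lp in d1; rewrite lq in d2.
have -> : Sl Xi a p - Sl Xi a q = (Sl Xi a M - Sl Xi a q) - (Sl Xi a M - Sl Xi a p).
  by rewrite opprB [RHS]addrC addrA subrK.
apply: (le_trans (ler_normB _ _)); rewrite addrC; exact: lerD.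
Qed.

Lemma tail_small {R : realType} (K z e : R) (a b : R) : 0 <= K -> 0 < z -> 0 < e -> a <= b ->
  exists N0, forall N, (N0 <= N)%N -> K * ((b - a) / N.+1%:R) `^ z <= e.
Proof.
move=> K0 z0 e0 ab.
have K1 : 0 < K + 1 by exact: ltr_wpDl K0 ltr01.
have [eta eta0 Heta] := small_pow z (e / (K + 1)) z0 (divr_gt0 e0 K1).
have [N0 HN0] := hsmall a b eta eta0.
exists N0 => N hN.
have hb : ((b - a) / N.+1%:R) `^ z <= e / (K + 1).
  by apply: Heta; [rewrite divr_ge0 // subr_ge0 | apply: ltW; exact: HN0].
apply: (le_trans (ler_wpM2l K0 hb)).
rewrite mulrA ler_pdivrMr // mulrC ler_wpM2l ?ltW //; lra.
Qed.

Local Open Scope classical_set_scope.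
Lemma sew_exists {R : realType} {U : completeNormedModType R} (Xi : R -> R -> U) (T c th : R) :
 0 <= c -> 1 < th ->
 (forall s u t, 0 <= s -> s <= u -> u <= t -> t <= T ->
    `|Xi s t - Xi s u - Xi u t| <= c * (t - s) `^ th) ->
 forall a b, 0 <= a -> a <= b -> b <= T ->
 exists I : U, forall eta p, path <%R a p -> last a p = b ->
   path (fun u v => v - u <= eta) a p ->
   `|Sl Xi a p - I| <= Asew c th * eta `^ (th - 1) * (b - a).
Proof.
move=> c0 th1 H3 a b a0 ab bT.
have A0 : 0 <= Asew c th by exact: Asew_ge0.
have z0 : 0 < th - 1 by rewrite subr_gt0.
have [eab|nab] := eqVneq a b.
  exists 0 => eta p hp lp mp.
  have -> : p = [::].
    apply/eqP; apply/negPn/negP => pn0.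
    by have := lt_path_lt_last hp pn0; rewrite lp eab ltxx.
  by rewrite /= subrr normr0 eab subrr mulr0.
have lab : a < b by rewrite lt_neqAle nab ab.
pose h (N : nat) := (b - a) / N.+1%:R.
pose u (N : nat) := Sl Xi a (map (unif a b N) (iota 1 N.+1)).
have hu N : [/\ path <%R a (map (unif a b N) (iota 1 N.+1)),
    last a (map (unif a b N) (iota 1 N.+1)) = b &
    path (fun u v => v - u <= h N) a (map (unif a b N) (iota 1 N.+1))].
  have [hP hD] := unif_part a b N lab.
  have := part_path a b N.+1 (unif a b N) (h N) hP ltac:(by move=> i _; rewrite hD).
  by [].
set K := Asew c th * (b - a).
have K0 : 0 <= K by rewrite /K mulr_ge0 // subr_ge0.
have tail e : 0 < e -> exists N0, forall N, (N0 <= N)%N -> Asew c th * h N `^ (th - 1) * (b - a) <= e.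
  move=> e0; have [N0 HN0] := tail_small K (th - 1) e a b K0 z0 e0 ab.
  by exists N0 => N hN; rewrite mulrAC; exact: HN0.
have cmp N M : `|u N - u M| <= Asew c th * h N `^ (th - 1) * (b - a) + Asew c th * h M `^ (th - 1) * (b - a).
  have [p1 l1 m1] := hu N; have [p2 l2 m2] := hu M.
  exact: compare Xi T c th c0 th1 H3 a b (h N) (h M) _ _ a0 lab bT p1 l1 m1 p2 l2 m2.
have cu : cvg (u @ \oo).
  apply: cauchy_cvg; apply: cauchy_exP => e e0.
  have [N0 HN0] := tail (e / 3) ltac:(by rewrite divr_gt0).
  exists (u N0); exists N0 => // N hN /=.
  rewrite -ball_normE /=.
  apply: (le_lt_trans (cmp N0 N)).
  have := HN0 N0 (leqnn _); have := HN0 N hN; lra.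
exists (lim (u @ \oo)) => eta p hp lp mp.
apply/ler_addgt0Pr => e e0.
have := (cvgrPdist_le _ _).1 cu (e / 2) ltac:(by rewrite divr_gt0).
case=> N1 _ HN1.
have [N0 HN0] := tail (e / 2) ltac:(by rewrite divr_gt0).
set N := maxn N0 N1.
have h1 := HN1 N (leq_maxr N0 N1).
have h2 := HN0 N (leq_maxl N0 N1).
have [q1 q2 q3] := hu N.
have h3 := compare Xi T c th c0 th1 H3 a b eta (h N) _ _ a0 lab bT hp lp mp q1 q2 q3.
rewrite -/(u N) in h3.
have := ler_distD (u N) (Sl Xi a p) (lim (u @ \oo)).
rewrite distrC in h1.
move: h1 h2 h3; set A1 := Asew c th * eta `^ (th - 1) * (b - a).
set A2 := Asew c th * h N `^ (th - 1) * (b - a).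
lra.
Qed.

Lemma zid2 {V : zmodType} (a b c x y : V) : c - (x + y) = ((a - x) + (b - y)) - ((a + b) - c).
Proof.
by rewrite (opprB (a + b) c) (addrACA a (-x) b (-y)) (addrAC (a + b) (-x - y))
  (addrC (a + b) (c - (a + b))) (subrK (a + b) c) opprD.
Qed.

Lemma from_small {R : realType} {U : normedModType R} (x : U) :
  (forall e : R, 0 < e -> `|x| <= e) -> x = 0.
Proof.
move=> H; apply/eqP; rewrite -normr_eq0 eq_le normr_ge0 andbT.
by apply/ler_addgt0Pr => e e0; rewrite add0r; exact: H.
Qed.

Definition LB {R : realType} {U V : normedModType R} (W : R -> {linear V -> U}) (X : R -> V)
  (th a b : R) (I : U) : Prop :=
  exists2 A, 0 <= A & forall eta p, path <%R a p -> last a p = b ->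
    path (fun u v => v - u <= eta) a p ->
    `|Sl (XiY W X) a p - I| <= A * eta `^ (th - 1) * (b - a).

Lemma unif_in {R : realType} (a b : R) N i : a <= b -> (i <= N.+1)%N ->
  a <= unif a b N i <= b.
Proof.
move=> ab iN; rewrite /unif; apply/andP; split.
  by rewrite lerDl mulr_ge0 // divr_ge0 // subr_ge0.
rewrite -lerBrDl; apply: (le_trans (y := N.+1%:R * ((b - a) / N.+1%:R))).
  by rewrite ler_wpM2r ?divr_ge0 ?subr_ge0 // ler_nat.
by rewrite mulrC divfK ?pnatr_eq0.
Qed.

Lemma fine_list {R : realType} (a b eta : R) : a <= b -> 0 < eta ->
  exists p, [/\ path <%R a p, last a p = b & path (fun u v => v - u <= eta) a p].
Proof.
move=> ab e0; have [eab|nab] := eqVneq a b; first by exists [::]; split.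
have lab : a < b by rewrite lt_neqAle nab ab.
have [N0 HN0] := hsmall a b eta e0.
have [hP hD] := unif_part a b N0 lab.
have [p1 p2 p3] := part_path a b N0.+1 (unif a b N0) eta hP
  ltac:(by move=> i _; rewrite hD; apply: ltW; exact: HN0).
by exists (map (unif a b N0) (iota 1 N0.+1)).
Qed.

Lemma LB_young {R : realType} {U V : normedModType R} (W : R -> {linear V -> U}) (X : R -> V)
  (th a b : R) (I : U) : 1 < th -> a <= b -> LB W X th a b I -> is_young_integral W X a b I.
Proof.
move=> th1 ab [A A0 HA] eps e0.
have z0 : 0 < th - 1 by rewrite subr_gt0.
set K := A * (b - a).
have K0 : 0 <= K by rewrite /K mulr_ge0 // subr_ge0.
have K1 : 0 < K + 1 by exact: ltr_wpDl K0 ltr01.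
have [eta eta0 Heta] := small_pow (th - 1) (eps / (K + 1)) z0 (divr_gt0 e0 K1).
exists eta => // n s hP hM.
have [p1 p2 p3] := part_path a b n s eta hP (fun i hi => ltW (hM i hi)).
rewrite riemann_Sl; case: (hP) => -> _.
apply: (le_lt_trans (HA _ _ p1 p2 p3)).
rewrite mulrAC -/K.
apply: (le_lt_trans (ler_wpM2l K0 (Heta eta (ltW eta0) (lexx _)))).
rewrite mulrA ltr_pdivrMr // mulrC ltr_pM2l //; lra.
Qed.

Lemma LB_zero {R : realType} {U V : normedModType R} (W : R -> {linear V -> U}) (X : R -> V)
  (th a : R) (I : U) : LB W X th a a I -> I = 0.
Proof.
move=> [A A0 HA]; have := HA 1 [::] isT erefl isT.
rewrite subrr mulr0 /= sub0r normrN normr_le0 => /eqP //.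
Qed.

Lemma young_unique {R : realType} {U V : normedModType R} (W1 W2 : R -> {linear V -> U})
  (X : R -> V) (th a b : R) (J I : U) : 1 < th -> a <= b ->
  is_young_integral W1 X a b J -> LB W2 X th a b I ->
  (forall u, a <= u <= b -> W1 u = W2 u) -> J = I.
Proof.
move=> th1 ab HJ HI HW.
have z0 : 0 < th - 1 by rewrite subr_gt0.
apply/eqP; rewrite -subr_eq0; apply/eqP; apply: from_small => e e0.
have e2 : 0 < e / 2 by rewrite divr_gt0.
have [eta1 eta1_0 H1] := HJ (e / 2) e2.
have [eab|nab] := eqVneq a b.
  rewrite -eab in HI; rewrite (LB_zero _ _ _ _ _ HI) subr0.
  have := H1 0%N (fun _ => a) ltac:(by split; [|split]) ltac:(by []).
  rewrite /riemann_sum big_ord0 sub0r normrN => h; apply: ltW; apply: (lt_trans h).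
  by rewrite ltr_pdivrMr // ltr_pMr // ltr1n.
have lab : a < b by rewrite lt_neqAle nab ab.
case: HI => A A0 HA.
have K0 : 0 <= A * (b - a) by rewrite mulr_ge0 // subr_ge0.
have [N0 HN0] := tail_small (A * (b - a)) (th - 1) (e / 2) a b K0 z0 e2 ab.
have [N1 HN1] := hsmall a b eta1 eta1_0.
set N := maxn N0 N1.
have [hP hD] := unif_part a b N lab.
have h1 := H1 N.+1 (unif a b N) hP ltac:(by move=> i _; rewrite hD; exact: HN1 N (leq_maxr _ _)).
have [p1 p2 p3] := part_path a b N.+1 (unif a b N) ((b - a) / N.+1%:R) hP
  ltac:(by move=> i _; rewrite hD).
have h2 := HA _ _ p1 p2 p3.
have h3 := HN0 N (leq_maxl _ _).
have eqR : riemann_sum W1 X N.+1 (unif a b N) = riemann_sum W2 X N.+1 (unif a b N).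
  apply: eq_bigr => i _; rewrite HW //; apply: unif_in => //; exact: ltnW.
rewrite eqR riemann_Sl in h1.
case: (hP) h1 => -> _ h1.
have := ler_distD (Sl (XiY W2 X) a [seq unif a b N i | i <- iota 1 N.+1]) J I.
rewrite distrC in h1; move: h1 h2 h3.
rewrite mulrAC.
lra.
Qed.

Lemma young_H3 {R : realType} {U V : normedModType R} (W : R -> {linear V -> U}) (X : R -> V)
  (T al ga Cw Cx : R) : 0 < al -> 0 < ga -> 0 <= Cw -> 0 <= Cx ->
  (forall s t, 0 <= s <= T -> 0 <= t <= T -> forall v, `|W t v - W s v| <= Cw * `|t - s| `^ ga * `|v|) ->
  (forall s t, 0 <= s <= T -> 0 <= t <= T -> `|X t - X s| <= Cx * `|t - s| `^ al) ->
  forall s u t, 0 <= s -> s <= u -> u <= t -> t <= T ->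
    `|XiY W X s t - XiY W X s u - XiY W X u t| <= (Cw * Cx) * (t - s) `^ (al + ga).
Proof.
move=> al0 ga0 Cw0 Cx0 hW hX s u t s0 su ut tT.
rewrite /XiY.
have -> : W s (X t - X s) - W s (X u - X s) - W u (X t - X u) = W s (X t - X u) - W u (X t - X u).
  by rewrite -linearB /= opprB addrA subrK.
have sT : 0 <= s <= T by apply/andP; split => //; lra.
have uT : 0 <= u <= T by apply/andP; split; lra.
have tT' : 0 <= t <= T by apply/andP; split; lra.
have h1 := hW u s uT sT (X t - X u).
have h2 := hX u t uT tT'.
have p1 : `|s - u| `^ ga <= (t - s) `^ ga.
  apply: powR_le; [exact: ltW | exact: normr_ge0 |].
  by rewrite distrC ger0_norm; [lra | rewrite subr_ge0].
have p2 : `|t - u| `^ al <= (t - s) `^ al.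
  apply: powR_le; [exact: ltW | exact: normr_ge0 |].
  by rewrite ger0_norm; [lra | rewrite subr_ge0].
apply: (le_trans h1).
rewrite powRD; last by rewrite gt_eqF //= addr_gt0.
have -> : Cw * Cx * ((t - s) `^ al * (t - s) `^ ga) = (Cw * (t - s) `^ ga) * (Cx * (t - s) `^ al) by ring.
apply: ler_pM; rewrite ?mulr_ge0 ?powR_ge0 //; [exact: ler_wpM2l | exact: le_trans h2 (ler_wpM2l Cx0 p2)].
Qed.

Lemma LB_add {R : realType} {U V : normedModType R} (W : R -> {linear V -> U}) (X : R -> V)
  (th a b c : R) (I1 I2 I3 : U) : 1 < th -> a <= b -> b <= c ->
  LB W X th a b I1 -> LB W X th b c I2 -> LB W X th a c I3 -> I3 = I1 + I2.
Proof.
move=> th1 ab bc [A1 A10 H1] [A2 A20 H2] [A3 A30 H3].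
have z0 : 0 < th - 1 by rewrite subr_gt0.
apply/eqP; rewrite -subr_eq0; apply/eqP; apply: from_small => e e0.
set K := (A1 + A2 + A3) * (c - a).
have K0 : 0 <= K by rewrite /K; apply: mulr_ge0; [rewrite !addr_ge0 | rewrite subr_ge0; lra].
have K1 : 0 < K + 1 by exact: ltr_wpDl K0 ltr01.
have [eta eta0 Heta] := small_pow (th - 1) (e / (K + 1)) z0 (divr_gt0 e0 K1).
have [p1 [q1 l1 m1]] := fine_list a b eta ab eta0.
have [p2 [q2 l2 m2]] := fine_list b c eta bc eta0.
have d1 := H1 _ _ q1 l1 m1.
have d2 := H2 _ _ q2 l2 m2.
have d3 := H3 eta (p1 ++ p2) ltac:(by rewrite cat_path q1 l1 q2)
  ltac:(by rewrite last_cat l1 l2) ltac:(by rewrite cat_path m1 l1 m2).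
rewrite Sl_cat l1 in d3.
rewrite (zid2 (Sl (XiY W X) a p1) (Sl (XiY W X) b p2)).
apply: (le_trans (ler_normB _ _)).
apply: (le_trans (lerD (ler_normD _ _) (lexx _))).
have x0 : 0 <= eta `^ (th - 1) by exact: powR_ge0.
have xe : eta `^ (th - 1) <= e / (K + 1) by apply: Heta; [exact: ltW | exact: lexx].
have f1 : A1 * eta `^ (th - 1) * (b - a) <= A1 * eta `^ (th - 1) * (c - a).
  by apply: ler_wpM2l; [rewrite mulr_ge0 | lra].
have f2 : A2 * eta `^ (th - 1) * (c - b) <= A2 * eta `^ (th - 1) * (c - a).
  by apply: ler_wpM2l; [rewrite mulr_ge0 | lra].
have f3 : K * eta `^ (th - 1) <= K * (e / (K + 1)) by exact: ler_wpM2l.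
have f4 : K * (e / (K + 1)) <= e.
  by rewrite mulrA ler_pdivrMr // mulrC ler_wpM2l ?ltW //; lra.
have hK : A1 * eta `^ (th - 1) * (c - a) + A2 * eta `^ (th - 1) * (c - a) +
   A3 * eta `^ (th - 1) * (c - a) = K * eta `^ (th - 1) by rewrite /K; ring.
move: d1 d2 d3 f1 f2 f3 f4 hK.
set S1 := `|Sl (XiY W X) a p1 - I1|.
set S2 := `|Sl (XiY W X) b p2 - I2|.
set S3 := `|Sl (XiY W X) a p1 + Sl (XiY W X) b p2 - I3|.
lra.
Qed.

Lemma holder_pos {R : realType} {U : normedModType R} (T al : R) (f : R -> U) :
  holder_on T al f -> exists2 C, 0 <= C & forall s t, 0 <= s <= T -> 0 <= t <= T ->
    `|f t - f s| <= C * `|t - s| `^ al.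
Proof.
move=> [C HC]; exists (Num.max C 0); first by rewrite le_max lexx orbT.
move=> s t hs ht; apply: (le_trans (HC s t hs ht)); apply: ler_wpM2r; first exact: powR_ge0.
by rewrite le_max lexx.
Qed.

Lemma min_lip {R : realType} (m s t : R) : `|Num.min m t - Num.min m s| <= `|t - s|.
Proof.
have h1 : t - s <= `|t - s| by exact: ler_norm.
have h2 : s - t <= `|t - s| by rewrite distrC; exact: ler_norm.
rewrite ler_norml; rewrite !minEle.
case: (leP m t) => ?; case: (leP m s) => ?; apply/andP; split; lra.
Qed.

Lemma min_in {R : realType} {m T x : R} : 0 <= m -> 0 <= x <= T -> 0 <= Num.min m x <= T.
Proof.
move=> m0 /andP[x0 xT]; rewrite minEle; case: (leP m x) => ?; apply/andP; split; lra.
Qed.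

Lemma hol_stop {R : realType} {U : normedModType R} (T al m : R) (Z : R -> U) :
  0 < al -> 0 <= m -> holder_on T al Z -> holder_on T al (stopped Z m).
Proof.
move=> al0 m0 /holder_pos [C C0 HC]; exists C => s t hs ht.
rewrite /stopped.
apply: (le_trans (HC _ _ (min_in m0 hs) (min_in m0 ht))).
apply: ler_wpM2l => //; apply: powR_le; [exact: ltW | exact: normr_ge0 | exact: min_lip].
Qed.

Local Close Scope classical_set_scope.

Theorem theorem6p2 (R : realType) (U V : completeNormedModType R)
  (T alpha gamma delta : R)
  (F : R -> (R -> U) -> {linear V -> U}) (X : R -> V)
  (hT : 0 < T)
  (halpha : 0 < alpha <= 1) (hgamma : 0 < gamma <= 1)
  (hag : 1 < alpha + gamma) (hdelta : 0 < delta)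
  (* F is a map on [0,T] x C^alpha([0,T],U): it only depends on Z|[0,T] *)
  (hFdom : forall (t : R) (Z Z' : R -> U), 0 <= t <= T ->
     holder_on T alpha Z -> holder_on T alpha Z' ->
     (forall x, 0 <= x <= T -> Z x = Z' x) -> F t Z = F t Z')
  (* each F(t,Z) is a bounded linear map, i.e. lies in L(V,U) *)
  (hFbdd : forall (t : R) (Z : R -> U), 0 <= t <= T -> holder_on T alpha Z ->
     exists c : R, forall v : V, `|F t Z v| <= c * `|v|)
  (* t |-> F(t,Z) is gamma-Hoelder for the operator norm *)
  (hFhol : forall Z : R -> U, holder_on T alpha Z ->
     exists C : R, forall s t : R, 0 <= s <= T -> 0 <= t <= T ->
       forall v : V, `|F t Z v - F s Z v| <= C * (`|t - s| `^ gamma) * `|v|)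
  (hFna : non_anticipating T alpha delta F)
  (hX : holder_on T alpha X) :
  forall y0 : U,
    exists Y : R -> U,
      [/\ holder_on T alpha Y, solves_young_ode T F X y0 Y &
        forall Y' : R -> U, holder_on T alpha Y' -> solves_young_ode T F X y0 Y' ->
          forall t : R, 0 <= t <= T -> Y' t = Y t].
Proof.
move=> y0.
set th := alpha + gamma.
have th1 : 1 < th by [].
have al0 : 0 < alpha by case/andP: halpha.
have ga0 : 0 < gamma by case/andP: hgamma.
have [Cx Cx0 hXC] := holder_pos _ _ _ hX.
have hFpos : forall Z, holder_on T alpha Z -> exists2 Cw, 0 <= Cw &
    forall s t, 0 <= s <= T -> 0 <= t <= T -> forall v,
      `|F t Z v - F s Z v| <= Cw * `|t - s| `^ gamma * `|v|.
  move=> Z /hFhol [C HC]; exists (Num.max C 0); first by rewrite le_max lexx orbT.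
  move=> s t hs ht v; apply: (le_trans (HC s t hs ht v)).
  rewrite ler_wpM2r // ler_wpM2r ?powR_ge0 //; by rewrite le_max lexx.
have IE : forall Z, holder_on T alpha Z -> exists2 A, 0 <= A &
    forall a b, 0 <= a -> a <= b -> b <= T -> exists I : U,
      forall eta p, path <%R a p -> last a p = b -> path (fun u v => v - u <= eta) a p ->
      `|Sl (XiY (fun u => F u Z) X) a p - I| <= A * eta `^ (th - 1) * (b - a).
  move=> Z hZ; have [Cw Cw0 hW] := hFpos Z hZ.
  exists (Asew (Cw * Cx) th); first by apply: Asew_ge0; rewrite ?mulr_ge0.
  apply: (sew_exists (XiY (fun u => F u Z) X) T (Cw * Cx) th) => //; first by rewrite mulr_ge0.
  exact: (young_H3 (fun u => F u Z) X T alpha gamma Cw Cx al0 ga0 Cw0 Cx0 hW hXC).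
have : forall Zt : (R -> U) * R, exists I : U, holder_on T alpha Zt.1 -> 0 <= Zt.2 <= T ->
    LB (fun u => F u Zt.1) X th 0 Zt.2 I.
  move=> [Z t] /=.
  case: (pselect (holder_on T alpha Z /\ 0 <= t <= T)) => [[hZ /andP[t0 tT]]|nh].
    have [A A0 HA] := IE Z hZ; have [I HI] := HA 0 t (lexx _) t0 tT.
    by exists I => _ _; exists A => //; rewrite subr0 in HI *.
  by exists 0 => hZ ht; exfalso; apply: nh.
move=> /choice [Ifun HIfun].
pose Phi (Z : R -> U) (t : R) := y0 + Ifun (Z, t).
have F0 : forall Z, holder_on T alpha Z -> Phi Z 0 = y0.
  move=> Z hZ; rewrite /Phi.
  have := HIfun (Z, 0) hZ ltac:(by rewrite lexx ltW).
  by move=> /LB_zero ->; rewrite addr0.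
have Fyoung : forall Z t, holder_on T alpha Z -> 0 <= t <= T ->
    is_young_integral (fun u => F u Z) X 0 t (Ifun (Z, t)).
  move=> Z t hZ ht; have t0 : 0 <= t by case/andP: ht.
  exact: (LB_young _ _ _ _ _ _ th1 t0 (HIfun (Z, t) hZ ht)).
have Funiq : forall Z t J, holder_on T alpha Z -> 0 <= t <= T ->
    is_young_integral (fun u => F u Z) X 0 t J -> J = Ifun (Z, t).
  move=> Z t J hZ ht HJ; apply: (young_unique _ _ _ _ _ _ _ _ th1 _ HJ (HIfun (Z, t) hZ ht)) => //.
  by case/andP: ht.
have Fstop : forall Z Z' r u, holder_on T alpha Z -> holder_on T alpha Z' -> 0 <= r ->
    (forall x, 0 <= x <= T -> x <= r -> Z x = Z' x) -> 0 <= u <= T -> u <= r + delta ->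
    F u Z = F u Z'.
  move=> Z Z' r u hZ hZ' r0 hZZ hu hur.
  set m := Num.max (u - delta) 0.
  have m0 : 0 <= m by rewrite le_max lexx orbT.
  have mr : m <= r by rewrite ge_max lerBlDr hur r0.
  rewrite (hFna u Z hu hZ) (hFna u Z' hu hZ') -/m.
  apply: hFdom => //; [exact: hol_stop | exact: hol_stop |].
  move=> x hx; rewrite /stopped; apply: hZZ; first exact: min_in.
  by rewrite ge_min mr.
have Fagree : forall Z Z' r t, holder_on T alpha Z -> holder_on T alpha Z' -> 0 <= r ->
    (forall x, 0 <= x <= T -> x <= r -> Z x = Z' x) -> 0 <= t <= T -> t <= r + delta ->
    Phi Z t = Phi Z' t.
  move=> Z Z' r t hZ hZ' r0 hZZ ht htr; rewrite /Phi; congr (y0 + _).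
  have t0 : 0 <= t by case/andP: ht.
  apply: (young_unique (fun u => F u Z) (fun u => F u Z') X th 0 t _ _ th1 t0
    (Fyoung Z t hZ ht) (HIfun (Z', t) hZ' ht)).
  move=> u /andP[u0 ut]; apply: (Fstop Z Z' r u hZ hZ' r0 hZZ); last by lra.
  by apply/andP; split => //; case/andP: ht => _ tT; lra.
have Fhol : forall Z, holder_on T alpha Z -> holder_on T alpha (Phi Z).
  move=> Z hZ.
  have [Cw Cw0 hW] := hFpos Z hZ.
  set A := Asew (Cw * Cx) th.
  have CC0 : 0 <= Cw * Cx by rewrite mulr_ge0.
  have A0 : 0 <= A by exact: Asew_ge0.
  have H3 := young_H3 (fun u => F u Z) X T alpha gamma Cw Cx al0 ga0 Cw0 Cx0 hW hXC.
  have h00 : (0 : R) <= 0 <= T by rewrite lexx ltW.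
  have [c0 hc0] := hFbdd 0 Z h00 hZ.
  set M := `|c0| + Cw * T `^ gamma.
  have M0 : 0 <= M by rewrite addr_ge0 ?mulr_ge0 ?powR_ge0.
  have WM : forall s v, 0 <= s <= T -> `|F s Z v| <= M * `|v|.
    move=> s v hs.
    have := ler_normD (F s Z v - F 0 Z v) (F 0 Z v); rewrite subrK => h.
    apply: (le_trans h); rewrite /M mulrDl addrC; apply: lerD.
      apply: (le_trans (hc0 v)); apply: ler_wpM2r => //; exact: ler_norm.
    apply: (le_trans (hW 0 s h00 hs v)); apply: ler_wpM2r => //; apply: ler_wpM2l => //.
    apply: powR_le; [exact: ltW | exact: normr_ge0 |].
    by rewrite subr0; case/andP: hs => s0 sT; rewrite ger0_norm.
  exists (M * Cx + A * T `^ gamma).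
  suff key : forall s t, 0 <= s <= T -> 0 <= t <= T -> s <= t ->
      `|Phi Z t - Phi Z s| <= (M * Cx + A * T `^ gamma) * `|t - s| `^ alpha.
    move=> s t hs ht; case: (leP s t) => st; first exact: key.
    rewrite distrC (distrC t s); apply: key => //; exact: ltW.
  move=> s t hs ht st.
  have [est|nst] := eqVneq s t.
    by rewrite est !subrr !normr0 powR0 ?gt_eqF // mulr0.
  have lst : s < t by rewrite lt_neqAle nst st.
  have /andP[s0 sT] := hs; have /andP[t0 tT] := ht.
  have [Ist HIst] := sew_exists (XiY (fun u => F u Z) X) T (Cw * Cx) th CC0 th1 H3 s t s0 st tT.
  have Eadd : Ifun (Z, t) = Ifun (Z, s) + Ist.
    apply: (LB_add (fun u => F u Z) X th 0 s t) => //.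
    - exact: (HIfun (Z, s) hZ hs).
    - by exists A.
    - exact: (HIfun (Z, t) hZ ht).
  have -> : Phi Z t - Phi Z s = Ist by rewrite /Phi Eadd (addrA y0) (addrC (y0 + Ifun (Z, s) + Ist)) addKr.
  have hloc := HIst (t - s) [:: t] ltac:(by rewrite /= lst) erefl ltac:(by rewrite /= lexx).
  rewrite /= addr0 in hloc.
  have hXi : `|XiY (fun u => F u Z) X s t| <= M * Cx * `|t - s| `^ alpha.
    rewrite /XiY; apply: (le_trans (WM s _ hs)); rewrite -mulrA; apply: ler_wpM2l => //.
    exact: hXC s t hs ht.
  have tsn : `|t - s| = t - s by rewrite ger0_norm // subr_ge0.
  have hpow : A * (t - s) `^ (th - 1) * (t - s) <= A * T `^ gamma * `|t - s| `^ alpha.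
    rewrite -mulrA (mulrC _ (t - s)) mulr_powRB1 ?subr_ge0 ?(lt_trans ltr01 th1) //.
    rewrite -mulrA; apply: ler_wpM2l => //.
    rewrite tsn /th powRD; last by rewrite gt_eqF //= addr_gt0.
    rewrite mulrC; apply: ler_wpM2r; first exact: powR_ge0.
    by apply: powR_le; [exact: ltW | rewrite subr_ge0 | lra].
  have := ler_normD (XiY (fun u => F u Z) X s t) (Ist - XiY (fun u => F u Z) X s t).
  rewrite addrC subrK [`|Ist - _|]distrC => h.
  apply: (le_trans h); rewrite mulrDl; apply: lerD => //; exact: le_trans hloc hpow.
pose Yk (k : nat) := iter k Phi (fun _ => y0).
have hY : forall k, holder_on T alpha (Yk k).
  elim=> [|k IH]; first by exists 0 => s t _ _; rewrite /Yk /= subrr normr0 mul0r.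
  exact: (Fhol (Yk k) IH).
have h00 : (0 : R) <= 0 <= T by rewrite lexx ltW.
have agreek : forall k x, 0 <= x <= T -> x <= k%:R * delta -> Yk k.+1 x = Yk k x.
  elim=> [|k IH] x hx hxk.
    have x0 : x = 0 by case/andP: hx => x0 _; rewrite mul0r in hxk; apply: le_anti; rewrite hxk x0.
    by rewrite x0; change (Phi (Yk 0) 0 = y0); rewrite F0 //; exact: hY 0.
  change (Phi (Yk k.+1) x = Phi (Yk k) x).
  apply: (Fagree (Yk k.+1) (Yk k) (k%:R * delta)) => //.
  - by rewrite mulr_ge0 // ltW.
  - by rewrite -natr1 mulrDl mul1r in hxk.
have [N HN] : exists N : nat, T <= N%:R * delta.
  exists (Num.bound (T / delta)); apply: ltW; rewrite -ltr_pdivrMr //.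
  by apply: archi_boundP; rewrite divr_ge0 // ltW.
set Y := Yk N.
have FP : forall x, 0 <= x <= T -> Phi Y x = Y x.
  move=> x hx; apply: (agreek N x hx); case/andP: hx => _ xT; exact: le_trans xT HN.
exists Y; split.
- exact: hY N.
- move=> t ht; have -> : Y t - y0 = Ifun (Y, t) by rewrite -(FP t ht) /Phi addrC addKr.
  exact: (Fyoung Y t (hY N) ht).
- move=> Y' hY' hsol.
  have FP' : forall x, 0 <= x <= T -> Phi Y' x = Y' x.
    by move=> x hx; rewrite /Phi -(Funiq Y' x _ hY' hx (hsol x hx)) addrC subrK.
  have claim : forall k x, 0 <= x <= T -> x <= k%:R * delta -> Y' x = Y x.
    elim=> [|k IH] x hx hxk.
      have x0 : x = 0 by case/andP: hx => x0 _; rewrite mul0r in hxk; apply: le_anti; rewrite hxk x0.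
      by rewrite x0 -(FP' 0 h00) -(FP 0 h00) !F0 //; exact: hY.
    rewrite -(FP' x hx) -(FP x hx).
    apply: (Fagree Y' Y (k%:R * delta)) => //; first exact: hY.
    - by rewrite mulr_ge0 // ltW.
    - by rewrite -natr1 mulrDl mul1r in hxk.
  move=> t ht; apply: (claim N t ht); case/andP: ht => _ tT; exact: le_trans tT HN.
Qed.
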